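(* Let $X$ be a compactum, let $n\geq2$, and let $f:X\to X$ be a function. Consider the statements: (1) $f$ is two-sided transitive; (2) $F_n(f)$ is two-sided transitive; (3) $SF_n(f)$ is two-sided transitive. Then (2) and (3) are equivalent, and (2) implies (1).
   Context: A compactum is a nondegenerate compact, perfect, Hausdorff topological space. $F_n(X)$ is the set of nonempty subsets of $X$ with at most $n$ points, with the Vietoris topology; $F_1(X)=\{\{x\}:x\in X\}$; $F_n(f)(A)=f(A)$. $SF_n(X)=F_n(X)/F_1(X)$ is the quotient collapsing $F_1(X)$ to a point, $q$ the quotient map, $F_X=q(F_1(X))$, and $SF_n(f)(\chi)=q(F_n(f)(q^{-1}(\chi)))$ for $\chi\neq F_X$, $SF_n(f)(F_X)=F_X$. A function $g:Z\to Z$ is two-sided transitive if $g$ is a homeomorphism and there is $z\in Z$ such that $\{g^k(z):k\in\mathbb{Z}\}$ is dense in $Z$. *)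

(* Defs.v *)
From HB Require Import structures.
From mathcomp Require Import all_boot all_order all_algebra.
From mathcomp Require Import all_classical all_reals topology.
Set Implicit Arguments. Unset Strict Implicit. Unset Printing Implicit Defensive.
Import Order.TTheory GRing.Theory Num.Theory.
Local Open Scope classical_set_scope.

Definition compactum (X : topologicalType) : Prop :=
  [/\ compact [set: X], hausdorff_space X, perfect_set [set: X]
    & exists x y : X, x <> y].

Definition two_sided_transitive (T : topologicalType) (g : T -> T) : Prop :=
  exists h : T -> T,
    [/\ continuous g, continuous h, cancel g h, cancel h g &
      exists z : T,
        dense [set y | exists k : nat, y = iter k g z \/ y = iter k h z]].

Definition Fn_pred (X : choiceType) (n : nat) (A : set X) : Prop :=
  A !=set0 /\ exists s : seq X, (size s <= n)%N /\ A = [set x | x \in s].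

Record Fn (X : topologicalType) (n : nat) := MkFn {
  fn_set :> set X;
  fn_prop : `[< Fn_pred n fn_set >] }.
Arguments MkFn {X n}.

Section FnTop.
Variables (X : topologicalType) (n : nat).

HB.instance Definition _ := [isSub for @fn_set X n].
HB.instance Definition _ := [Choice of Fn X n by <:].

(* Vietoris topology: generated by the subbase
   {A | A ⊆ U} and {A | A ∩ U ≠ ∅}, U open in X. *)
Definition vietoris_subbase (p : bool * set X) : set (Fn X n) :=
  if p.1 then [set A | (A : set X) `<=` p.2]
  else [set A | (A : set X) `&` p.2 !=set0].

HB.instance Definition _ :=
  @isSubBaseTopological.Build (Fn X n) (bool * set X)%type
    [set p | open p.2] vietoris_subbase.

End FnTop.

Lemma Fn_map_prop (X : topologicalType) (n : nat) (f : X -> X) (A : Fn X n) :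
  `[< Fn_pred n (f @` (A : set X)) >].
Proof.
apply/asboolP; case: A => A /= HA.
have [[a Aa] [s [sn EA]]] : Fn_pred n A by exact/asboolP.
rewrite EA in Aa *; split.
  by exists (f a), a.
exists (map f s); rewrite size_map; split => //.
apply/seteqP; split => y /=.
  by case=> x xs <-; exact: map_f.
by case/mapP => x xs ->; exists x.
Qed.

Definition Fn_map (X : topologicalType) (n : nat) (f : X -> X) (A : Fn X n)
  : Fn X n := MkFn (f @` (A : set X)) (Fn_map_prop f A).

Definition Fn_singleton (X : topologicalType) (n : nat) (A : Fn X n) : Prop :=
  exists x : X, (A : set X) = [set x].

(* Points of SF_n(X): either the collapsed point F_X (None) or the class of
   a non-singleton A (Some A). *)
Definition SFn (X : topologicalType) (n : nat) : Type :=
  option {A : Fn X n | ~~ `[< Fn_singleton A >]}.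

Definition SFq (X : topologicalType) (n : nat) (A : Fn X n) : SFn X n :=
  insub A.

Section SFnTop.
Variables (X : topologicalType) (n : nat).

HB.instance Definition _ := Choice.on (SFn X n).

Definition SFn_open (U : set (SFn X n)) : Prop := open (@SFq X n @^-1` U).

Program Definition SFn_topological_mixin :=
  @isOpenTopological.Build (SFn X n) SFn_open _ _ _.
Next Obligation. by rewrite /SFn_open preimage_setT; exact: openT. Qed.
Next Obligation. by move=> ? ? ? ?; exact: openI. Qed.
Next Obligation. by move=> I f ofi; apply: bigcup_open => i _; exact: ofi. Qed.
HB.instance Definition _ := SFn_topological_mixin.

End SFnTop.

Definition SFn_map (X : topologicalType) (n : nat) (f : X -> X)
  (chi : SFn X n) : SFn X n :=
  match chi with
  | None => None
  | Some B => SFq (Fn_map f (val B))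
  end.

(* Main.v *)
Require Import Defs.
From HB Require Import structures.
From mathcomp Require Import all_boot all_order all_algebra.
From mathcomp Require Import all_classical all_reals topology.
From mathcomp Require Import finmap.
Set Implicit Arguments. Unset Strict Implicit. Unset Printing Implicit Defensive.
Local Open Scope classical_set_scope.

Lemma openFnE (X : topologicalType) n (A : set (Fn X n)) :
  open A = [set \bigcup_(i in D') i | D' in subset^~ (finI_from [set p : bool * set X | open p.2] (@vietoris_subbase X n))] A.
Proof. reflexivity. Qed.

Lemma open_fin_bigcap (T : topologicalType) (I : choiceType) (F : {fset I}) (f : I -> set T) :
  (forall i, i \in F -> open (f i)) -> open (\bigcap_(i in [set` F]) f i).
Proof.
move=> oF; rewrite openE => x Hx; rewrite /interior /=.
apply: filter_bigI => i iF; apply: open_nbhs_nbhs; split; first exact: oF.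
exact: Hx.
Qed.

Lemma sub_open (X : topologicalType) n (p : bool * set X) : open p.2 ->
  open (@vietoris_subbase X n p).
Proof.
move=> op; rewrite openFnE; exists [set vietoris_subbase p].
  by move=> _ ->; apply: finI_from1.
by rewrite bigcup_set1.
Qed.

Lemma open_subU (X : topologicalType) n (U : set X) : open U ->
  open [set A : Fn X n | (A : set X) `<=` U].
Proof. by move=> oU; apply: (@sub_open X n (true, U)). Qed.

Lemma open_meetU (X : topologicalType) n (U : set X) : open U ->
  open [set A : Fn X n | (A : set X) `&` U !=set0].
Proof. by move=> oU; apply: (@sub_open X n (false, U)). Qed.

Lemma cont_to_Fn (T : topologicalType) (X : topologicalType) n (g : T -> Fn X n) :
  (forall U : set X, open U ->
     open (g @^-1` [set A : Fn X n | (A : set X) `<=` U]) /\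
     open (g @^-1` [set A : Fn X n | (A : set X) `&` U !=set0])) ->
  continuous g.
Proof.
move=> H; apply/continuousP => A; rewrite openFnE => -[D' sD' <-].
rewrite preimage_bigcup; apply: bigcup_open => i Di.
have [F sF <-] := sD' i Di; rewrite preimage_bigcap.
apply: open_fin_bigcap => j jF; have := sF j jF.
case: j {jF} => [[] U] /=; rewrite in_setE => oU; have [h1 h2] := H U oU.
  exact: h1.
exact: h2.
Qed.

Lemma pr_prop (X : topologicalType) n (Hn : (2 <= n)%N) (x y : X) :
  `[< Fn_pred n [set z | z \in [:: x; y]] >].
Proof.
apply/asboolP; split; first by exists x; rewrite /= inE eqxx.
by exists [:: x; y]; split.
Qed.

Definition pr (X : topologicalType) n (Hn : (2 <= n)%N) (x y : X) : Fn X n :=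
  MkFn _ (pr_prop Hn x y).
Arguments pr : simpl never.

Lemma prE (X : topologicalType) n (Hn : (2 <= n)%N) (x y z : X) :
  (pr Hn x y : set X) z <-> z = x \/ z = y.
Proof.
rewrite /= !inE; split; first by case/orP => /eqP ->; [left|right].
by case=> ->; rewrite eqxx ?orbT.
Qed.

Lemma pr_l (X : topologicalType) n (Hn : (2 <= n)%N) (x y : X) :
  (pr Hn x y : set X) x.
Proof. by apply/prE; left. Qed.
Lemma pr_r (X : topologicalType) n (Hn : (2 <= n)%N) (x y : X) :
  (pr Hn x y : set X) y.
Proof. by apply/prE; right. Qed.

Lemma prD (X : topologicalType) n (Hn : (2 <= n)%N) (x y z : X) :
  (pr Hn x y : set X) z -> z = x \/ z = y.
Proof. by move/prE. Qed.

Lemma memD2 (X : eqType) (x y z : X) : z \in [:: x; y] -> z = x \/ z = y.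
Proof. by rewrite !inE => /orP [/eqP->|/eqP->]; [left|right]. Qed.

Lemma pr_cont (X : topologicalType) n (Hn : (2 <= n)%N) (y : X) :
  continuous (fun x => pr Hn x y).
Proof.
apply: cont_to_Fn => U oU; split.
  have [Uy|nUy] := pselect (U y).
    suff -> : (fun x => pr Hn x y) @^-1` [set A : Fn X n | (A : set X) `<=` U] = U by [].
    apply/seteqP; split => x /=.
      by move=> H; apply: H; exact: pr_l.
    by move=> Ux z /memD2 [->|->].
  suff -> : (fun x => pr Hn x y) @^-1` [set A : Fn X n | (A : set X) `<=` U] = set0 by apply: open0.
  apply/seteqP; split => x //= H; apply: nUy; apply: H; exact: pr_r.
have [Uy|nUy] := pselect (U y).
  suff -> : (fun x => pr Hn x y) @^-1` [set A : Fn X n | (A : set X) `&` U !=set0] = setT by apply: openT.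
  apply/seteqP; split => x //= _; exists y; split => //; exact: pr_r.
suff -> : (fun x => pr Hn x y) @^-1` [set A : Fn X n | (A : set X) `&` U !=set0] = U by [].
apply/seteqP; split => x /=.
  by case=> z [] /memD2 [->|->] // /nUy.
by move=> Ux; exists x; split => //; exact: pr_l.
Qed.

Lemma pr_diag_cont (X : topologicalType) n (Hn : (2 <= n)%N) :
  continuous (fun x : X => pr Hn x x).
Proof.
apply: cont_to_Fn => U oU; split.
  suff -> : (fun x => pr Hn x x) @^-1` [set A : Fn X n | (A : set X) `<=` U] = U by [].
  apply/seteqP; split => x /=.
    by move=> H; apply: H; exact: pr_l.
  by move=> Ux z /memD2 [->|->].
suff -> : (fun x => pr Hn x x) @^-1` [set A : Fn X n | (A : set X) `&` U !=set0] = U by [].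
apply/seteqP; split => x /=.
  by case=> z [] /memD2 [->|->].
by move=> Ux; exists x; split => //; exact: pr_l.
Qed.

Lemma Fn_val_inj (X : topologicalType) n (A B : Fn X n) : (A : set X) = B -> A = B.
Proof. exact: val_inj. Qed.

Lemma Fn_ne (X : topologicalType) n (A : Fn X n) : exists a, (A : set X) a.
Proof.
case: A => A /= /asboolP [[a Aa] _]; by exists a.
Qed.

Lemma Fn_mapE (X : topologicalType) n (g : X -> X) (A : Fn X n) :
  (Fn_map g A : set X) = g @` (A : set X).
Proof. by []. Qed.

Lemma Fn_map_cancel (X : topologicalType) n (g g' : X -> X) :
  cancel g g' -> cancel (@Fn_map X n g) (Fn_map g').
Proof.
move=> gK A; apply: Fn_val_inj; rewrite !Fn_mapE.
apply/seteqP; split => x.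
  by case=> _ [a Aa <-] <-; rewrite gK.
by move=> Ax; exists (g x); [exists x|rewrite gK].
Qed.

Lemma iter_Fn (X : topologicalType) n (g : X -> X) (A : Fn X n) k :
  (iter k (Fn_map g) A : set X) = iter k g @` (A : set X).
Proof.
elim: k => [|k IH]; first by rewrite image_id.
rewrite iterS Fn_mapE IH; apply/seteqP; split => x.
  by case=> _ [a Aa <-] <-; exists a.
by case=> a Aa <-; exists (iter k g a) => //; exists a.
Qed.

Lemma Fn_map_cont (X : topologicalType) n (g : X -> X) :
  continuous g -> continuous (@Fn_map X n g).
Proof.
move=> /continuousP gc; apply: cont_to_Fn => U oU; split.
  suff -> : Fn_map g @^-1` [set A : Fn X n | (A : set X) `<=` U] =
    [set A : Fn X n | (A : set X) `<=` g @^-1` U] by apply: open_subU; apply: gc.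
  apply/seteqP; split => A /= H.
    by move=> a Aa; apply: H; exists a.
  by move=> _ [a Aa <-]; apply: H.
suff -> : Fn_map g @^-1` [set A : Fn X n | (A : set X) `&` U !=set0] =
  [set A : Fn X n | (A : set X) `&` g @^-1` U !=set0] by apply: open_meetU; apply: gc.
apply/seteqP; split => A /= [z [Az Uz]].
  by case: Az => a Aa eq; exists a; split => //; rewrite /= eq.
by exists (g z); split => //; exists z.
Qed.

Lemma cont_of_Fn_map (X : topologicalType) n (Hn : (2 <= n)%N) (g : X -> X) :
  continuous (@Fn_map X n g) -> continuous g.
Proof.
move=> /continuousP gc; apply/continuousP => U oU.
have := @pr_diag_cont X n Hn; move/continuousP => pc.
have := pc _ (gc _ (open_subU n oU)).
congr open; apply/seteqP; split => x /=.
  by move=> H; apply: H; exists x => //; exact: pr_l.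
by move=> Ux _ [z] /memD2 [->|->] <-.
Qed.

Lemma openSFE (X : topologicalType) n (U : set (SFn X n)) :
  open U = open (@SFq X n @^-1` U).
Proof. reflexivity. Qed.

Lemma SFq_comm (X : topologicalType) n (g : X -> X) (A : Fn X n) :
  SFn_map g (SFq A) = SFq (Fn_map g A).
Proof.
rewrite /SFq; case: insubP => [u Hu <-|] //.
move/negPn/asboolP => [x Ax].
rewrite insubN //; apply/negPn/asboolP; exists (g x).
by rewrite Fn_mapE Ax image_set1.
Qed.

Lemma SFq_Some (X : topologicalType) n (A : Fn X n) B : SFq A = Some B -> val B = A.
Proof. by rewrite /SFq; case: insubP => [u _ <- [->]|]. Qed.

Lemma SFq_None (X : topologicalType) n (A : Fn X n) : SFq A = None -> Fn_singleton A.
Proof. by rewrite /SFq; case: insubP => [//|/negPn/asboolP]. Qed.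

Lemma SFq_val (X : topologicalType) n (B : {A : Fn X n | ~~ `[< Fn_singleton A >]}) :
  SFq (val B) = Some B.
Proof. by rewrite /SFq valK. Qed.

Lemma SFq_surj (X : topologicalType) n (Hn : (2 <= n)%N) (x : X) (chi : SFn X n) :
  exists A, SFq A = chi.
Proof.
case: chi => [B|]; first by exists (val B); rewrite SFq_val.
exists (pr Hn x x); rewrite /SFq insubN //; apply/negPn/asboolP; exists x.
by apply/seteqP; split => z; [case/prE => ->|move=> ->; exact: pr_l].
Qed.

Definition liftS (X : topologicalType) n (S : set (Fn X n)) : set (SFn X n) :=
  [set chi | if chi is Some B then S (val B) else False].

Lemma liftS_pre (X : topologicalType) n (S : set (Fn X n)) :
  (forall A, S A -> ~ Fn_singleton A) -> @SFq X n @^-1` liftS S = S.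
Proof.
move=> HS; apply/seteqP; split => A /=.
  by case E: (SFq A) => [B|] //= SB; rewrite -(SFq_Some E).
move=> SA; case E: (SFq A) => [B|] /=; first by rewrite (SFq_Some E).
by apply: (HS A SA); apply: SFq_None.
Qed.

Lemma SFn_map_cont (X : topologicalType) n (g : X -> X) :
  continuous (@Fn_map X n g) -> continuous (SFn_map (n := n) g).
Proof.
move=> /continuousP gc; apply/continuousP => U; rewrite !openSFE => oU.
suff -> : @SFq X n @^-1` (SFn_map g @^-1` U) = Fn_map g @^-1` (@SFq X n @^-1` U) by apply: gc.
by apply/seteqP; split => A /=; rewrite SFq_comm.
Qed.

Lemma SFn_map_cancel (X : topologicalType) n (g g' : X -> X) :
  cancel (@Fn_map X n g) (Fn_map g') -> cancel (SFn_map (n := n) g) (SFn_map g').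
Proof.
move=> K [B|] //=; rewrite SFq_comm K; exact: SFq_val.
Qed.

Lemma iter_SF (X : topologicalType) n (g : X -> X) (A : Fn X n) k :
  iter k (SFn_map g) (SFq A) = SFq (iter k (Fn_map g) A).
Proof. by elim: k => [|k IH] //=; rewrite IH SFq_comm. Qed.

Lemma iter_None (X : topologicalType) n (g : X -> X) k :
  iter k (SFn_map (n := n) g) None = None.
Proof. by elim: k => [|k IH] //=; rewrite IH. Qed.

Lemma sep (X : topologicalType) : hausdorff_space X -> forall x y : X, x <> y ->
  exists U V : set X, [/\ open U, open V, U x, V y & forall z, U z -> V z -> False].
Proof.
rewrite open_hausdorff => H x y /eqP /H [[U V] /= [xU yV] [oU oV /eqP UV]].
move: xU yV; rewrite !in_setE => xU yV.
exists U, V; split => //.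
by move=> z Uz Vz; have : (U `&` V) z by []; rewrite UV.
Qed.

Definition meet2 (X : topologicalType) n (U V : set X) : set (Fn X n) :=
  [set A : Fn X n | (A : set X) `&` U !=set0] `&` [set A | (A : set X) `&` V !=set0].

Lemma meet2_open (X : topologicalType) n (U V : set X) : open U -> open V ->
  open (meet2 (n:=n) U V).
Proof. by move=> oU oV; apply: openI; [apply: open_meetU|apply: open_meetU]. Qed.

Lemma meet2_ns (X : topologicalType) n (U V : set X) :
  (forall z, U z -> V z -> False) -> forall A, meet2 (n:=n) U V A -> ~ Fn_singleton A.
Proof.
move=> UV A [[a [Aa Ua]] [b [Ab Vb]]] [x Ax].
move: Aa Ab; rewrite Ax /= => ea eb; subst a b; exact: UV Ua Vb.
Qed.

Lemma open_lift_meet2 (X : topologicalType) n (U V : set X) : open U -> open V ->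
  (forall z, U z -> V z -> False) -> open (liftS (meet2 (n:=n) U V)).
Proof.
by move=> oU oV UV; rewrite openSFE liftS_pre; [apply: meet2_open|apply: meet2_ns].
Qed.

Lemma cont_of_SF (X : topologicalType) n (Hn : (2 <= n)%N) (g : X -> X) :
  hausdorff_space X -> (forall x : X, exists y, y <> x) -> injective g ->
  continuous (SFn_map (n := n) g) -> continuous g.
Proof.
move=> hX X2 ginj /continuousP gc; apply/continuousP => U oU.
rewrite openE => x Ux; rewrite /interior /=.
have [y yx] := X2 x.
have gyx : g x <> g y by move=> /ginj E; apply: yx.
have [V1 [V2 [oV1 oV2 V1x V2y V12]]] := sep hX gyx.
pose W := V1 `&` U.
have oW : open W by apply: openI.
have WV2 : forall z, W z -> V2 z -> False by move=> z [] + _; apply: V12.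
have HS := meet2_ns (n:=n) WV2.
have := gc _ (@open_lift_meet2 X n _ _ oW oV2 WV2); rewrite openSFE.
have -> : @SFq X n @^-1` (SFn_map g @^-1` liftS (meet2 (n:=n) W V2)) =
   Fn_map g @^-1` meet2 (n:=n) W V2.
  apply/seteqP; split => A /=; rewrite SFq_comm;
    have := liftS_pre HS; move/(congr1 (fun P => P (Fn_map g A))) => /= ->//.
move=> oP.
have := @pr_cont X n Hn y; move/continuousP => pc.
have oQ := pc _ oP.
apply: (@filterS _ _ _ ((fun x' => pr Hn x' y) @^-1` (Fn_map g @^-1` meet2 (n:=n) W V2))).
  move=> x' /= [[_ [[z zp <-] Wgz]] _].
  case/prE: zp => ?; subst z; first by case: Wgz.
  by exfalso; apply: (WV2 (g y)).
apply: open_nbhs_nbhs; split => //=.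
split.
  by exists (g x); split; [exists x => //; exact: pr_l|split].
by exists (g y); split => //; exists y => //; exact: pr_r.
Qed.

Lemma inv_of (X : choiceType) (g : X -> X) : injective g ->
  (forall x, exists y, g y = x) -> exists h, cancel g h /\ cancel h g.
Proof.
move=> ginj gs; exists (fun x => xget x [set y | g y = x]).
have K : cancel (fun x => xget x [set y | g y = x]) g.
  by move=> x; have := xgetPex x (gs x).
split => // x; apply: ginj; exact: K.
Qed.

Lemma pr_ns (X : topologicalType) n (Hn : (2 <= n)%N) (x y : X) :
  x <> y -> ~ Fn_singleton (pr Hn x y).
Proof.
move=> xy [w E]; apply: xy.
have := pr_l Hn x y; have := pr_r Hn x y; rewrite E /= => -> -> //.
Qed.

Lemma pr_meet2 (X : topologicalType) n (Hn : (2 <= n)%N) (U V : set X) (a b : X) :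
  U a -> V b -> meet2 (n:=n) U V (pr Hn a b).
Proof.
by move=> Ua Vb; split; [exists a; split => //; exact: pr_l|exists b; split => //; exact: pr_r].
Qed.

Lemma pr_sing (X : topologicalType) n (Hn : (2 <= n)%N) (x : X) :
  (pr Hn x x : set X) = [set x].
Proof. by apply/seteqP; split => z; [case/prE => ->|move=> ->; exact: pr_l]. Qed.

Lemma Fn_bij (X : topologicalType) n (Hn : (2 <= n)%N) (g : X -> X) G :
  cancel (@Fn_map X n g) G -> cancel G (Fn_map g) ->
  exists h, [/\ cancel g h, cancel h g & G = Fn_map h].
Proof.
move=> K1 K2.
have ginj : injective g.
  move=> x y gxy.
  have : Fn_map g (pr Hn x y) = Fn_map g (pr Hn x x).
    apply: Fn_val_inj; rewrite !Fn_mapE pr_sing image_set1.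
    apply/seteqP; split => z; [case=> w /prE [->|->] <- //|move=> ->; exists x => //; exact: pr_l].
  move/(can_inj K1) => E.
  by have := pr_r Hn x y; rewrite E pr_sing.
have gs : forall x, exists y, g y = x.
  move=> x; have := pr_l Hn x x; rewrite -[pr Hn x x]K2 Fn_mapE.
  by case=> y _ <-; exists y.
have [h [gh hg]] := inv_of ginj gs.
exists h; split => //; apply: funext => A.
by rewrite -{1}[A](Fn_map_cancel (n:=n) hg) K1.
Qed.

Lemma partB (X : topologicalType) n (f : X -> X) : (2 <= n)%N ->
  two_sided_transitive (Fn_map (n := n) f) -> two_sided_transitive f.
Proof.
move=> Hn [G [Fc Gc K1 K2 [z dz]]].
have [h [fh hf EG]] := Fn_bij Hn K1 K2.
subst G.
exists h; split => //.
- exact: (@cont_of_Fn_map X n Hn f Fc).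
- exact: (@cont_of_Fn_map X n Hn h Gc).
have [a za] := Fn_ne z.
exists a => O [o Oo] oO.
have [|B [BO [k [eB|eB]]]] := dz [set A : Fn X n | (A : set X) `<=` O] _ (open_subU n oO).
- by exists (pr Hn o o) => w; rewrite pr_sing => ->.
- exists (iter k f a); split; last by exists k; left.
  by apply: BO; rewrite eB iter_Fn; exists a.
- exists (iter k h a); split; last by exists k; right.
  by apply: BO; rewrite eB iter_Fn; exists a.
Qed.

Lemma partA1 (X : topologicalType) n (f : X -> X) : (2 <= n)%N ->
  two_sided_transitive (Fn_map (n := n) f) -> two_sided_transitive (SFn_map (n := n) f).
Proof.
move=> Hn [G [Fc Gc K1 K2 [z dz]]].
have [h [fh hf EG]] := Fn_bij Hn K1 K2.
subst G.
exists (SFn_map h); split.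
- exact: SFn_map_cont.
- exact: SFn_map_cont.
- exact: SFn_map_cancel.
- exact: SFn_map_cancel.
have [a za] := Fn_ne z.
exists (SFq z) => O [chi Ochi] oO.
have [A0 eA0] := SFq_surj Hn a chi.
rewrite openSFE in oO.
have [|B [BO [k [eB|eB]]]] := dz _ _ oO.
- by exists A0; rewrite /= eA0.
- by exists (SFq B); split => //; exists k; left; rewrite iter_SF eB.
- by exists (SFq B); split => //; exists k; right; rewrite iter_SF eB.
Qed.

Lemma partA2 (X : topologicalType) n (f : X -> X) : compactum X -> (2 <= n)%N ->
  two_sided_transitive (SFn_map (n := n) f) -> two_sided_transitive (Fn_map (n := n) f).
Proof.
move=> [_ hX pX [a0 [b0 ab0]]] Hn [G [Sc Gc K1 K2 [chi dchi]]].
have X2 : forall x : X, exists y, y <> x.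
  move=> x; have [->|xa] := pselect (x = a0); first by exists b0 => E; apply: ab0.
  by exists a0 => E; apply: xa.
have finj : injective f.
  move=> x y fxy; apply: contrapT => xy.
  have : SFn_map f (SFq (pr Hn x y)) = SFn_map f None.
    rewrite SFq_comm /=; rewrite /SFq insubN //; apply/negPn/asboolP.
    exists (f x); rewrite Fn_mapE; apply/seteqP; split => z.
      by case=> w /prE [->|->] <-.
    by move=> ->; exists x => //; exact: pr_l.
  move/(can_inj K1)/SFq_None; exact: pr_ns.
have fs : forall y, exists x, f x = y.
  move=> y; have [y' yy'] := X2 y.
  case E: (SFq (pr Hn y y')) => [B|]; last first.
    by exfalso; apply: (@pr_ns X n Hn y y' (fun E => yy' (esym E))); apply: SFq_None.
  have := K2 (Some B); case: (G (Some B)) => [C|] //= EC.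
  have := SFq_Some EC; have := SFq_Some E => -> E2.
  have := pr_l Hn y y'; rewrite E2 Fn_mapE; case=> x _ <-; by exists x.
have [h [fh hf]] := inv_of finj fs.
have KS : cancel (SFn_map (n:=n) f) (SFn_map h) by apply: SFn_map_cancel; apply: Fn_map_cancel.
have EG : G = SFn_map h.
  by apply: funext => c; rewrite -[in RHS](K2 c) KS.
subst G.
have hinj : injective h by apply: can_inj hf.
have fc : continuous f by apply: (@cont_of_SF X n Hn f hX X2 finj Sc).
have hc : continuous h by apply: (@cont_of_SF X n Hn h hX X2 hinj Gc).
exists (Fn_map h); split.
- exact: Fn_map_cont.
- exact: Fn_map_cont.
- exact: Fn_map_cancel.
- exact: Fn_map_cancel.
case: chi dchi => [B|] dchi; last first.
  exfalso.
  have [U [V [oU oV Ua Vb UV]]] := sep hX ab0.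
  have [|psi [Opsi [k [e|e]]]] := dchi _ _ (@open_lift_meet2 X n _ _ oU oV UV).
  - exists (SFq (pr Hn a0 b0)).
    have := liftS_pre (meet2_ns (n:=n) UV).
    move/(congr1 (fun P => P (pr Hn a0 b0))) => /= ->; exact: pr_meet2.
  - by move: Opsi; rewrite e iter_None.
  - by move: Opsi; rewrite e iter_None.
exists (val B) => O [A0 OA0] oO.
have [A1 [b1 [b2 [OA1 A1b1 A1b2 b12]]]] :
    exists A1 b1 b2, [/\ O A1, (A1 : set X) b1, (A1 : set X) b2 & b1 <> b2].
  have [[x Ax]|ns] := pselect (Fn_singleton A0).
    have := @pr_cont X n Hn x; move/continuousP => pc.
    have oP := pc _ oO.
    have Px : ((fun x' => pr Hn x' x) @^-1` O) x.
      by rewrite /= (_ : pr Hn x x = A0) //; apply: Fn_val_inj; rewrite pr_sing Ax.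
    have [x' [Px' x'x]] : exists x', ((fun x' => pr Hn x' x) @^-1` O) x' /\ x' <> x.
      apply: contrapT => Hno; apply: (proj1 perfectTP pX x).
      suff <- : ((fun x' => pr Hn x' x) @^-1` O) = [set x] by [].
      apply/seteqP; split => w; last by move=> ->.
      by move=> Pw; apply: contrapT => wx; apply: Hno; exists w.
    by exists (pr Hn x' x), x', x; split => //; [exact: pr_l|exact: pr_r].
  have [a Aa] := Fn_ne A0.
  have [b [Ab ba]] : exists b, (A0 : set X) b /\ b <> a.
    apply: contrapT => Hno; apply: ns; exists a; apply/seteqP; split => w; last by move=> ->.
    by move=> A0w; apply: contrapT => wa; apply: Hno; exists w.
  by exists A0, b, a.
have [U [V [oU oV Ub1 Vb2 UV]]] := sep hX b12.
pose O1 := O `&` meet2 (n:=n) U V.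
have HS : forall A, O1 A -> ~ Fn_singleton A.
  by move=> A [_ mA]; apply: (meet2_ns UV).
have oQ : open (liftS O1).
  by rewrite openSFE liftS_pre //; apply: openI => //; apply: meet2_open.
have LP := liftS_pre HS.
have [|psi [Qpsi [k [e|e]]]] := dchi _ _ oQ.
- exists (SFq A1); move/(congr1 (fun P => P A1)): LP => /= ->.
  by split => //; split; [exists b1|exists b2].
- rewrite -SFq_val iter_SF in e; subst psi.
  move/(congr1 (fun P => P (iter k (Fn_map f) (val B)))): LP => /= E.
  by move: Qpsi; rewrite E => -[? _]; exists (iter k (Fn_map f) (val B)); split => //; exists k; left.
- rewrite -SFq_val iter_SF in e; subst psi.
  move/(congr1 (fun P => P (iter k (Fn_map h) (val B)))): LP => /= E.
  by move: Qpsi; rewrite E => -[? _]; exists (iter k (Fn_map h) (val B)); split => //; exists k; right.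
Qed.

Theorem theorem22 (X : topologicalType) (n : nat) (f : X -> X) :
  compactum X -> (2 <= n)%N ->
  (two_sided_transitive (Fn_map (n := n) f) <->
   two_sided_transitive (SFn_map (n := n) f)) /\
  (two_sided_transitive (Fn_map (n := n) f) -> two_sided_transitive f).
Proof.
move=> cX Hn; split; first split.
- exact: partA1.
- exact: partA2.
- exact: partB.
Qed.
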